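(* Let $X$ be a non-empty set, $R$ a binary relation on $X$, and $\tau$ a compact topology on $X$. Suppose $R$ is upper tc-semicontinuous with respect to $\tau$. Then there exists a non-empty $w$-stable set of $(X,R)$.
   Context: For a binary relation $R$ on $X$, the transitive closure $\overline{R}$ is defined by: $x\overline{R}y$ iff there exist $K\ge 1$ and $x_0,\dots,x_K\in X$ with $x_0=x$, $x_K=y$, and $x_{k-1}Rx_k$ for all $k\in\{1,\dots,K\}$. A set $F\subseteq X$ is a $w$-stable set of $(X,R)$ if (i) (internal stability) for all distinct $x,y\in F$, $(x,y)\notin\overline{R}$; and (ii) (external stability) for all $x\in F$ and $y\in X\setminus F$, if $y\overline{R}x$ then $x\overline{R}y$. $R$ is upper tc-semicontinuous with respect to $\tau$ if for every $x\in X$ the set $\{y\in X: x\overline{R}y\}$ is open in $\tau$. A topology is compact if every open cover of $X$ has a finite subcover. *)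

(* Defs.v *)
From Stdlib Require Import Classical List.

Section Defs.
Variable X : Type.

Inductive tc (R : X -> X -> Prop) : X -> X -> Prop :=
| tc_step : forall x y, R x y -> tc R x y
| tc_cons : forall x y z, R x y -> tc R y z -> tc R x z.

Record is_topology (tau : (X -> Prop) -> Prop) : Prop := {
  top_full : tau (fun _ => True);
  top_empty : tau (fun _ => False);
  top_inter : forall U V, tau U -> tau V -> tau (fun x => U x /\ V x);
  top_union : forall (F : (X -> Prop) -> Prop),
      (forall U, F U -> tau U) -> tau (fun x => exists U, F U /\ U x)
}.

Definition compact_top (tau : (X -> Prop) -> Prop) : Prop :=
  forall (I : Type) (U : I -> X -> Prop),
    (forall i, tau (U i)) -> (forall x, exists i, U i x) ->
    exists l : list I, forall x, exists i, List.In i l /\ U i x.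

Definition upper_tc_semicontinuous (R : X -> X -> Prop)
    (tau : (X -> Prop) -> Prop) : Prop :=
  forall x, tau (fun y => tc R x y).

Definition w_stable (R : X -> X -> Prop) (F : X -> Prop) : Prop :=
  (forall x y, F x -> F y -> x <> y -> ~ tc R x y) /\
  (forall x y, F x -> ~ F y -> tc R y x -> tc R x y).

End Defs.
Arguments tc {X}.
Arguments compact_top {X}.
Arguments is_topology {X}.
Arguments upper_tc_semicontinuous {X}.
Arguments w_stable {X}.

(* Main.v *)
Require Import Defs.
From Stdlib Require Import Classical List.

Lemma tc_trans (X : Type) (R : X -> X -> Prop) x y z :
  tc R x y -> tc R y z -> tc R x z.
Proof.
  intros H; induction H; intros Hz.
  - eapply tc_cons; eauto.
  - eapply tc_cons; eauto.
Qed.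

Lemma fin_min (X : Type) (S : X -> X -> Prop)
  (irr : forall a, ~ S a a) (tr : forall a b c, S a b -> S b c -> S a c) :
  forall l : list X, l <> nil -> exists m, In m l /\ forall b, In b l -> ~ S b m.
Proof.
  induction l as [|a l IH]; intros Hne; [congruence|].
  destruct l as [|c l].
  - exists a; split; [left; reflexivity|]. intros b [<-|[]]; apply irr.
  - destruct IH as [m [Hm Hmin]]; [discriminate|].
    destruct (classic (S a m)) as [Ham|Ham].
    + exists a; split; [left; reflexivity|].
      intros b [<-|Hb]; [apply irr|].
      intros Hba. apply (Hmin b Hb). eapply tr; eauto.
    + exists m; split; [right; exact Hm|].
      intros b [<-|Hb]; [exact Ham|apply Hmin; exact Hb].
Qed.

Theorem lemma1 (X : Type) (R : X -> X -> Prop) (tau : (X -> Prop) -> Prop) :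
  (exists x : X, True) ->
  is_topology tau ->
  compact_top tau ->
  upper_tc_semicontinuous R tau ->
  exists F : X -> Prop, (exists x, F x) /\ w_stable R F.
Proof.
  intros [x0 _] Htop Hcomp Husc.
  destruct (classic (exists x, forall y, tc R y x -> tc R x y)) as [[x Hx]|Hno].
  - exists (fun z => z = x). split; [exists x; reflexivity|]. split.
    + intros a b -> -> Hab; congruence.
    + intros a b -> Hb Hba. apply Hx; exact Hba.
  - exfalso.
    assert (Hbad : forall x, exists y, tc R y x /\ ~ tc R x y).
    { intros x. apply NNPP; intros Hn. apply Hno. exists x. intros y Hy.
      apply NNPP; intros Hxy. apply Hn. exists y; auto. }
    destruct (Hcomp X (fun y z => tc R y z) Husc) as [l Hl].
    { intros x. destruct (Hbad x) as [y [Hy _]]. exists y; exact Hy. }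
    set (S := fun a b => tc R a b /\ ~ tc R b a).
    assert (irr : forall a, ~ S a a) by (intros a [h1 h2]; tauto).
    assert (tr : forall a b c, S a b -> S b c -> S a c).
    { intros a b c [h1 h2] [h3 h4]. split.
      - eapply tc_trans; eauto.
      - intros hca. apply h2. eapply tc_trans; eauto. }
    destruct (fin_min X S irr tr l) as [m [Hm Hmin]].
    { destruct (Hl x0) as [i [Hi _]]. destruct l; [destruct Hi|discriminate]. }
    destruct (Hbad m) as [y [Hym Hmy]].
    destruct (Hl y) as [j [Hj Hjy]].
    apply (Hmin j Hj). split.
    + eapply tc_trans; eauto.
    + intros Hmj. apply Hmy. eapply tc_trans; eauto.
Qed.
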